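(* Let $\nu$ be a Borel probability measure on $\mathbb{R}^d$. Assume that $r>0$ and $\lambda_1,\dots,\lambda_d,M\ge1$. Then $$\nu\big(\{x:\ \nu(D(x,\lambda_1r,\dots,\lambda_dr))\ge M\,\nu(D(x,r))\}\big)\le 4^dM^{-1}\lambda_1\cdots\lambda_d.$$
   Context: For $x\in\mathbb{R}^d$ and $h_1,\dots,h_d\ge0$, $D(x,h_1,\dots,h_d)=\prod_{i=1}^d[x_i-h_i,x_i+h_i]$, and $D(x,r)=D(x,r,\dots,r)$. *)

(* Defs.v *)
From HB Require Import structures.
From mathcomp Require Import all_boot all_order all_algebra.
From mathcomp Require Import all_classical all_reals all_analysis.
Set Implicit Arguments. Unset Strict Implicit. Unset Printing Implicit Defensive.
Import Order.TTheory GRing.Theory Num.Theory.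
Local Open Scope classical_set_scope.
Local Open Scope ring_scope.

(* R^d is modelled as d.-tuple R, equipped (by mathcomp-analysis) with the
   product sigma-algebra of the Borel sigma-algebras on R, which is the Borel
   sigma-algebra of R^d. *)

Definition box (R : realType) (d : nat) (x : d.-tuple R) (h : 'I_d -> R)
  : set (d.-tuple R) :=
  [set y | forall i : 'I_d, x`_i - h i <= y`_i <= x`_i + h i].

Definition cube (R : realType) (d : nat) (x : d.-tuple R) (r : R)
  : set (d.-tuple R) := box x (fun _ => r).

(* Main.v *)
Require Import Defs.
From HB Require Import structures.
From mathcomp Require Import all_boot all_order all_algebra.
From mathcomp Require Import all_classical all_reals all_analysis.
From mathcomp Require Import measurable_realfun lra.
Import Order.TTheory GRing.Theory Num.Theory.
Local Open Scope classical_set_scope.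
Local Open Scope ring_scope.

Section S.
Context (R : realType) (d : nat).
Local Notation T := (d.-tuple R).

Lemma meas_coord (i : 'I_d) : measurable_fun setT (fun y : T => y`_i).
Proof.
have -> : (fun y : T => y`_i) = (@tnth _ R ^~ i).
  by apply: funext => y; rewrite (tnth_nth 0).
exact: measurable_tnth.
Qed.

Lemma meas_pre (i : 'I_d) (Y : set R) : measurable Y ->
  measurable ((fun y : T => y`_i) @^-1` Y).
Proof. by move=> mY; rewrite -[X in measurable X]setTI; apply: meas_coord. Qed.

Lemma meas_box (x : T) h : measurable (box x h).
Proof.
have -> : box x h = \bigcap_(i in [set: 'I_d]) ((fun y : T => y`_i) @^-1` `[x`_i - h i, x`_i + h i]).
  apply/seteqP; split => y /=.
    by move=> H i _ /=; rewrite in_itv /=; apply: H.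
  by move=> H i; have := H i I; rewrite /= in_itv.
apply: fin_bigcap_measurable; first exact: finite_finset.
by move=> i _; apply: meas_pre.
Qed.

Lemma meas_mu_box (nu : probability T R) h :
  measurable_fun setT (fun x : T => (nu (box x h) : \bar R)).
Proof.
pose A := [set p : T * T | forall i : 'I_d, `|p.2`_i - p.1`_i| <= h i].
have mA : measurable A.
  have -> : A = \bigcap_(i in [set: 'I_d]) ((fun p : T * T => p.2`_i - p.1`_i) @^-1` `[- h i, h i]).
    apply/seteqP; split => p /=.
      by move=> H i _ /=; rewrite in_itv /= -ler_norml; apply: H.
    by move=> H i; have := H i I; rewrite /= in_itv /= -ler_norml.
  apply: fin_bigcap_measurable; first exact: finite_finset.
  move=> i _; rewrite -[X in measurable X]setTI.
  apply: measurable_funB => //.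
    exact: measurableT_comp (meas_coord i) measurable_snd.
  exact: measurableT_comp (meas_coord i) measurable_fst.
have := measurable_fun_xsection nu mA.
apply: eq_measurable_fun => x _; congr (nu _).
apply/seteqP; split => y /=; rewrite /xsection /= in_setE /= => H i.
  by move: (H i) => /=; rewrite ler_distl.
by rewrite /= ler_distl; apply: H.
Qed.
Lemma card_window (n : nat) (a L : R) : 0 <= L ->
  (#|[set j : 'I_n | (a < (j : nat)%:R) && ((j : nat)%:R <= a + L)]%SET|%:R <= L + 1 :> R).
Proof.
move=> L0.
set J := (X in #|X|).
pose m0 : nat := if a < 0 then 0%N else (Num.trunc a).+1.
have am0 : a < m0%:R.
  rewrite /m0; case: ifP => [//|/negbT]; rewrite -leNgt => a0.
  by have /andP[_ ->] := trunc_itv a0.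
have m0j : forall j : nat, a < j%:R -> (m0 <= j)%N.
  move=> j aj; rewrite /m0; case: ifP => // /negbT; rewrite -leNgt => a0.
  have /andP[ta _] := trunc_itv a0.
  by rewrite -(ltr_nat R); apply: le_lt_trans ta aj.
pose c := (Num.trunc L).
have jc : forall j : 'I_n, j \in J -> (m0 <= j)%N && (j - m0 <= c)%N.
  move=> j; rewrite inE => /andP[aj jaL].
  have mj := m0j _ aj; rewrite mj /=.
  rewrite /c truncn_ge_nat // natrB //.
  by rewrite lerBlDr (le_trans jaL) // addrC lerD2l ltW.
pose f (j : 'I_n) : 'I_c.+1 := inord (j - m0).
have finj : {in J &, injective f}.
  move=> j1 j2 /jc /andP[h1 h1'] /jc /andP[h2 h2'] /(congr1 val).
  rewrite /f /= !inordK ?ltnS // => e; apply: val_inj => /=.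
  by rewrite -(subnK h1) -(subnK h2) e.
rewrite -(card_in_imset finj).
apply: (le_trans (y := c.+1%:R)).
  by rewrite ler_nat (leq_trans (max_card _)) // card_ord.
by rewrite -addn1 natrD lerD2r truncn_le.
Qed.
Lemma card_fam (n d0 : nat) (J : 'I_d0 -> {set 'I_n}) :
  #|[pred k : {ffun 'I_d0 -> 'I_n} | [forall i, k i \in J i]]| = (\prod_(i < d0) #|J i|)%N.
Proof.
have H : [pred k : {ffun 'I_d0 -> 'I_n} | [forall i, k i \in J i]] =i family (fun i => mem (J i)).
  by move=> k; rewrite !inE.
rewrite (eq_card H) card_family foldrE big_map big_enum /=.
done.
Qed.

Lemma meas_hbox (lo hi : 'I_d -> R) : measurable [set y : T | forall i, lo i <= y`_i < hi i].
Proof.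
have -> : [set y : T | forall i, lo i <= y`_i < hi i] = \bigcap_(i in [set: 'I_d]) ((fun y : T => y`_i) @^-1` `[lo i, hi i[).
  apply/seteqP; split => y /=.
    by move=> H i _ /=; rewrite in_itv /=; apply: H.
  by move=> H i; have := H i I; rewrite /= in_itv.
apply: fin_bigcap_measurable; first exact: finite_finset.
by move=> i _; apply: meas_pre.
Qed.

Lemma arith {r lam N kk x yi : R} : 0 < r -> 1 <= lam ->
  (kk - N) * r <= x -> x < (kk - N + 1) * r -> x - lam * r <= yi -> yi <= x + lam * r ->
  ((yi - lam * r) / r + N - 1 < kk) && (kk <= (yi - lam * r) / r + N - 1 + (2 * lam + 1)).
Proof.
move=> r0 l1 c1 c2 b1 b2.
have : yi - lam * r = (yi - lam * r) / r * r by rewrite divfK // gt_eqF.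
move: ((yi - lam * r) / r) => w yw.
apply/andP; split; nra.
Qed.

Section Main.
Variables (nu : probability T R) (r : R) (lam : 'I_d -> R) (M : R).
Hypotheses (r0 : 0 < r) (lam1 : forall i, 1 <= lam i) (M1 : 1 <= M).
Let B (x : T) := box x (fun i => lam i * r).
Let E := [set x : T | (M%:E * nu (cube x r) <= nu (B x))%E].

Lemma mE : measurable E.
Proof.
rewrite -[E]setTI; apply: measurable_lee => //.
  by apply: measurable_funeM; apply: meas_mu_box.
exact: meas_mu_box.
Qed.

Section Grid.
Variable N : nat.
Let n := (N + N)%N.
Let cell (k : {ffun 'I_d -> 'I_n}) := [set y : T | forall i,
   ((k i : nat)%:R - N%:R) * r <= y`_i < ((k i : nat)%:R - N%:R + 1) * r].
Let KN := [set y : T | forall i : 'I_d, - (N%:R * r) <= y`_i < N%:R * r].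
Let t0 : T := [tuple (0:R) | i < d].
Let xk k := xget t0 (E `&` cell k).
Let G k := [set y | (E `&` cell k) (xk k) /\ B (xk k) y].

Lemma mcell k : measurable (cell k).
Proof. exact: (meas_hbox (fun i => _) (fun i => _)). Qed.

Lemma mG k : measurable (G k).
Proof.
rewrite /G; have [P|nP] := pselect ((E `&` cell k) (xk k)).
  have -> : [set y | (E `&` cell k) (xk k) /\ B (xk k) y] = B (xk k).
    by apply/seteqP; split => y /= => [[]//|]; split.
  exact: meas_box.
have -> : [set y | (E `&` cell k) (xk k) /\ B (xk k) y] = set0.
  by apply/seteqP; split => y /= => [[]//|].
exact: measurable0.
Qed.


Lemma cell_cube k x : cell k x -> cell k `<=` cube x r.
Proof.
move=> cx y cy i; have := cx i; have := cy i.
rewrite !(mulrDl _ 1) !mul1r.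
set a := (_ - _) * r => /andP[h1 h2] /andP[h3 h4].
by apply/andP; split; lra.
Qed.

Lemma step2 k : (nu (E `&` cell k) <= (M^-1)%:E * nu (G k))%E.
Proof.
have [ex|nex] := pselect (exists x, (E `&` cell k) x); last first.
  have -> : E `&` cell k = set0.
    by apply/seteqP; split => y // Hy; apply: nex; exists y.
  rewrite measure0; apply: mule_ge0 => //; rewrite lee_fin invr_ge0; exact: le_trans ler01 M1.
have P : (E `&` cell k) (xk k) := xgetPex t0 ex.
have -> : G k = B (xk k).
  by apply/seteqP; split => y /= => [[]//|]; split.
have [Ex Cx] := P.
apply: (@le_trans _ _ (nu (cell k))).
  by apply: le_measure; rewrite ?inE; [apply: measurableI; [exact: mE|exact: mcell]|exact: mcell|apply: subIsetr].
apply: (@le_trans _ _ (nu (cube (xk k) r))).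
  by apply: le_measure; rewrite ?inE; [exact: mcell|exact: meas_box|exact: cell_cube].
have M0 : M != 0 by apply: lt0r_neq0; exact: lt_le_trans ltr01 M1.
rewrite -[X in (X <= _)%E]mul1e -(mulVf M0) EFinM -muleA.
apply: lee_wpmul2l; first by rewrite lee_fin invr_ge0; exact: le_trans ler01 M1.
exact: Ex.
Qed.


Lemma cover : KN `<=` \bigcup_(k in [set: {ffun 'I_d -> 'I_n}]) cell k.
Proof.
move=> y Ky; have r0' := r0.
have z0 (i : 'I_d) : 0 <= y`_i / r + N%:R.
  have /andP[h _] := Ky i.
  have : y`_i = y`_i / r * r by rewrite divfK // gt_eqF.
  move: (y`_i / r) => z yz; rewrite yz in h; nra.
have hj (i : 'I_d) : (Num.trunc (y`_i / r + N%:R) < n)%N.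
  rewrite truncn_lt_nat // /n natrD.
  have /andP[_ h] := Ky i.
  have : y`_i = y`_i / r * r by rewrite divfK // gt_eqF.
  move: (y`_i / r) => z yz; rewrite yz in h; nra.
exists [ffun i => Ordinal (hj i)] => //= i; rewrite ffunE /=.
have /andP[h1 h2] := truncn_itv (z0 i).
move: h1 h2; set t := Num.trunc _ => h1 h2.
rewrite -natr1 in h2.
have : y`_i = y`_i / r * r by rewrite divfK // gt_eqF.
move: (y`_i / r) h1 h2 => z h1 h2 yz; rewrite yz.
apply/andP; split; nra.
Qed.

Lemma step1 : (nu (E `&` KN) <= \sum_(k : {ffun 'I_d -> 'I_n}) nu (E `&` cell k))%E.
Proof.
have H := @content_sub_fsum _ R T nu _ [set: {ffun 'I_d -> 'I_n}] (E `&` KN) (fun k => E `&` cell k).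
rewrite (fsbigE (index_enum _)) in H; last by move=> i _; rewrite mem_index_enum.
- apply: le_trans (H _ _ _ _) _.
  + exact: finite_finset.
  + by move=> k _; apply: measurableI; [exact: mE|exact: mcell].
  + apply: measurableI; first exact: mE. exact: (meas_hbox (fun i => _) (fun i => _)).
  + move=> y [Ey Ky]; have [k _ ck] := cover _ Ky; by exists k.
  + by under eq_bigl do rewrite in_setT.
- exact: index_enum_uniq.
- by [].
Qed.


Lemma point_bound y : \sum_(k : {ffun 'I_d -> 'I_n}) \1_(G k) y <= \prod_(i < d) (2 * lam i + 2).
Proof.
have r0' := r0.
pose a (i : 'I_d) := (y`_i - lam i * r) / r + N%:R - 1.
pose L (i : 'I_d) := 2 * lam i + 1.
pose J (i : 'I_d) := [set j : 'I_n | (a i < (j:nat)%:R) && ((j:nat)%:R <= a i + L i)]%SET.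
apply: (@le_trans _ _ (\sum_(k : {ffun 'I_d -> 'I_n} | [forall i, k i \in J i]) 1)).
  rewrite [X in _ <= X]big_mkcond /=; apply: ler_sum => k _.
  rewrite indicE; have [Gy|nGy] := boolP (y \in G k); last first.
    by case: ifP.
  have [[_ Cx] By] : G k y by rewrite -in_setE.
  have -> : [forall i, k i \in J i].
    apply/forallP => i; rewrite /J inE /a /L.
    have /andP[c1 c2] := Cx i.
    have /andP[b1 b2] := By i.
    exact: (arith r0 (lam1 i) c1 c2 b1 b2).
  by [].
rewrite sumr_const card_fam natr_prod; apply: ler_prod => i _.
apply/andP; split; first exact: ler0n.
have -> : 2 * lam i + 2 = L i + 1 by rewrite /L -addrA.
rewrite /J; apply: card_window; rewrite /L; have := lam1 i; lra.
Qed.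


Lemma step3 : (\sum_(k : {ffun 'I_d -> 'I_n}) nu (G k) <= (\prod_(i < d) (2 * lam i + 2))%:E)%E.
Proof.
have mf k : measurable_fun setT (fun y => (\1_(G k) y)%:E : \bar R).
  by apply/measurable_EFinP; apply: measurable_indic; exact: mG.
rewrite (eq_bigr (fun k => (\int[nu]_(y in setT) (\1_(G k) y)%:E)%E)); last first.
  by move=> k _; rewrite integral_indic ?setIT //; exact: mG.
have f0 : forall k (y : T), setT y -> (0 <= (\1_(G k) y)%:E :> \bar R)%E.
  by move=> k y _; rewrite lee_fin.
rewrite -(ge0_integral_sum nu measurableT mf f0).
apply: (@le_trans _ _ (\int[nu]_(y in setT) (cst (\prod_(i < d) (2 * lam i + 2))%:E) y)%E).
  apply: ge0_le_integral => //.
  - by move=> y _; apply: sume_ge0 => k _; rewrite lee_fin.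
  - by apply: emeasurable_sum => k; exact: mf.
  - by move=> y _; rewrite sumEFin lee_fin; exact: point_bound.
rewrite integral_cst //.
  set s := (X in (_ * X)%E); have -> : s = 1%E by exact: probability_setT.
  by rewrite mule1.
Qed.


Lemma bound_N : (nu (E `&` KN) <= (M^-1 * \prod_(i < d) (2 * lam i + 2))%:E)%E.
Proof.
apply: le_trans step1 _.
apply: (@le_trans _ _ (\sum_(k : {ffun 'I_d -> 'I_n}) (M^-1)%:E * nu (G k))%E).
  by apply: lee_sum => k _; exact: step2.
rewrite -ge0_sume_distrr; last by move=> k _; exact: measure_ge0.
rewrite EFinM; apply: lee_wpmul2l; last exact: step3.
by rewrite lee_fin invr_ge0; exact: le_trans ler01 M1.
Qed.
End Grid.

Lemma final : (nu E <= (M^-1 * \prod_(i < d) (2 * lam i + 2))%:E)%E.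
Proof.
have r0' := r0.
pose K (N : nat) := [set y : T | forall i : 'I_d, - (N%:R * r) <= y`_i < N%:R * r].
pose F N := E `&` K N.
have mF N : measurable (F N).
  apply: measurableI; first exact: mE.
  exact: (meas_hbox (fun i => _) (fun i => _)).
have UE : \bigcup_N F N = E.
  apply/seteqP; split => [y [N _ []//]|y Ey].
  pose N := ((\sum_(i < d) Num.trunc ((`|y`_i| / r)%R))%N).+1.
  exists N => //; split => // i.
  have h : `|y`_i| / r < N%:R.
    rewrite -truncn_lt_nat ?divr_ge0 ?normr_ge0 ?ltW //.
    rewrite /N ltnS (bigD1 i) //=; exact: leq_addr.
  have : `|y`_i| < N%:R * r by rewrite -ltr_pdivrMr.
  rewrite ltr_norml => /andP[a b]; apply/andP; split; [exact: ltW | exact: b].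
have nd : nondecreasing_seq F.
  move=> N1 N2 N12; apply/subsetPset => y [Ey Ky]; split => // i.
  have /andP[h1 h2] := Ky i.
  have : (N1%:R <= N2%:R :> R) by rewrite ler_nat.
  move=> h; apply/andP; split; nra.
have cv := @nondecreasing_cvg_mu _ _ R nu F mF (ltac:(rewrite UE; exact: mE)) nd.
rewrite UE in cv.
rewrite -(cvg_lim _ cv) //.
apply: lime_le; first by apply/cvg_ex; eexists; exact: cv.
by apply: nearW => N; exact: bound_N.
Qed.

End Main.
End S.

Theorem lemma4p2 (R : realType) (d : nat)
  (nu : probability (d.-tuple R) R)
  (r : R) (lam : 'I_d -> R) (M : R) :
  0 < r -> (forall i, 1 <= lam i) -> 1 <= M ->
  (nu [set x | (M%:E * nu (cube x r) <= nu (box x (fun i => (lam i * r)%R)))%E]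
    <= ((4 ^+ d) * M^-1 * \prod_(i < d) lam i)%:E)%E.
Proof.
move=> r0 lam1 M1.
apply: le_trans (@final R d nu r lam M r0 lam1 M1) _.
rewrite lee_fin -mulrA mulrCA; apply: ler_wpM2l.
  by rewrite invr_ge0; exact: le_trans ler01 M1.
have -> : (4 : R) ^+ d = \prod_(i < d) (4:R) by rewrite prodr_const card_ord.
rewrite -big_split /=; apply: ler_prod => i _.
have := lam1 i; move=> h; apply/andP; split; lra.
Qed.
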